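(* If $(a_0,a_1,\cdots,a_{k-1})\neq0$, then \[{\rm rk}(B_{\vec a})\geq \frac{m}{e}-2(k-1).\]
   Context: Let $m,n,d,e$ be fixed positive integers such that $m=2n$, $e=\gcd(n,d)=\gcd(m,d)$, and $1\leq k\leq \frac{n}{e}$. For $\vec a=(a_0,a_1,\cdots,a_k)\in\mathbb{F}_{2^{n}}\times\mathbb{F}_{2^m}^k$, define the quadratic form on the $\mathbb{F}_{2^e}$-vector space $\mathbb{F}_{2^m}$ \[Q_{\vec a}(x)={\rm Tr}_{\mathbb{F}_{2^{n}}/\mathbb{F}_{2^e}}(a_0x^{2^{\frac{nd}{e}}+1})+\sum_{j=1}^{k-1}{\rm Tr}_{\mathbb{F}_{2^{m}}/\mathbb{F}_{2^e}}(a_jx^{2^{(\frac{n}{e}-j)d}+1})+{\rm Tr}_{\mathbb{F}_{2^{m}}/\mathbb{F}_{2^e}}(a_kx),\] and the associated $\mathbb{F}_{2^e}$-bilinear form $B_{\vec a}(x,y)=Q_{\vec a}(x+y)-Q_{\vec a}(x)-Q_{\vec a}(y)$, i.e. \[B_{\vec a}(x,y)={\rm Tr}_{\mathbb{F}_{2^{n}}/\mathbb{F}_{2^e}}(a_0(xy^{2^{\frac{nd}{e}}}+x^{2^{\frac{nd}{e}}}y))+\sum_{j=1}^{k-1}{\rm Tr}_{\mathbb{F}_{2^{m}}/\mathbb{F}_{2^e}}(a_j(xy^{2^{(\frac{n}{e}-j)d}}+x^{2^{(\frac{n}{e}-j)d}}y)).\] ${\rm rk}(B_{\vec a})$ denotes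 the rank of $B_{\vec a}$ as a bilinear form over $\mathbb{F}_{2^e}$ on $\mathbb{F}_{2^m}$, i.e. $\frac{m}{e}-\dim_{\mathbb{F}_{2^e}}{\rm Rad}(B_{\vec a})$, where ${\rm Rad}(B_{\vec a})=\{x\in\mathbb{F}_{2^m}\mid B_{\vec a}(x,y)=0~\forall y\in\mathbb{F}_{2^m}\}$. *)

(* Defs.v *)
From HB Require Import structures.
From mathcomp Require Import all_boot all_order all_algebra all_field.
Set Implicit Arguments. Unset Strict Implicit. Unset Printing Implicit Defensive.
Import GRing.Theory.
Local Open Scope ring_scope.

(* Setting: F is the base field F_{2^e} (#|F| = 2^e), L is a finite-dimensional
   field extension of F playing the role of F_{2^m} (\dim_F L = m/e). *)
Section Defs.
Variables (F : finFieldType) (L : fieldExtType F).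

Definition trq (e N : nat) (y : L) : L := \sum_(i < N) y ^+ (2 ^ (e * i)).

(* The bilinear form B_a(x,y); a 0 = a_0, a j = a_j (1 <= j <= k-1). m = 2n. *)
Definition Bform (n d e k : nat) (a : nat -> L) (x y : L) : L :=
  trq e (n %/ e) (a 0%N * (x * y ^+ (2 ^ ((n * d) %/ e)) + x ^+ (2 ^ ((n * d) %/ e)) * y))
  + \sum_(1 <= j < k) trq e ((2 * n) %/ e)
      (a j * (x * y ^+ (2 ^ ((n %/ e - j) * d)) + x ^+ (2 ^ ((n %/ e - j) * d)) * y)).

(* The radical Rad(B) = {x | B(x,y) = 0 for all y}, as an F-subspace of L
   (the span of the set, which is already a subspace). *)
Definition RadB (n d e k : nat) (a : nat -> L) : {vspace L} :=
  <<map (fun x : finvect_type L => (x : L))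
      (enum [pred x : finvect_type L |
               [forall y : finvect_type L, Bform n d e k a x y == 0%R]])>>%VS.

Definition rkB (n d e k : nat) (a : nat -> L) : nat :=
  ((2 * n) %/ e - \dim (RadB n d e k a))%N.
End Defs.

(* Main.v *)
Require Import Defs.
From HB Require Import structures.
From mathcomp Require Import all_boot all_order all_algebra all_field.
From mathcomp Require Import ring zify.
Import GRing.Theory.
Local Open Scope ring_scope.

Definition linwrap (F : fieldType) (L : vectType F) (f : L -> L) (H : linear f) : L -> L := f.
HB.instance Definition _ (F : fieldType) (L : vectType F) (f : L -> L) (H : linear f) :=
  GRing.isLinear.Build F L L *:%R (@linwrap F L f H) H.

Lemma linwrapE (F : fieldType) (L : vectType F) (f : L -> L) (H : linear f) x :
  linfun (@linwrap F L f H) x = f x.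
Proof. by rewrite lfunE. Qed.

Lemma abel (R : comNzRingType) (c u : nat -> R) n :
  \sum_(0 <= i < n.+1) c i * u i =
  (\sum_(0 <= i < n.+1) c i) * u 0%N
  + \sum_(0 <= j < n) (\sum_(j.+1 <= i < n.+1) c i) * (u j.+1 - u j).
Proof.
elim: n => [|n IH]; first by rewrite !big_nat1 big_geq // addr0.
have E1 : \sum_(0 <= j < n.+1) (\sum_(j.+1 <= i < n.+2) c i) * (u j.+1 - u j)
  = \sum_(0 <= j < n.+1) (\sum_(j.+1 <= i < n.+1) c i) * (u j.+1 - u j)
    + c n.+1 * \sum_(0 <= j < n.+1) (u j.+1 - u j).
  rewrite mulr_sumr -big_split /=; apply: eq_big_nat => j /andP[_ hj].
  by rewrite (big_nat_recr n.+1) //= mulrDl.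
have E2 : \sum_(0 <= j < n.+1) (\sum_(j.+1 <= i < n.+1) c i) * (u j.+1 - u j)
  = \sum_(0 <= j < n) (\sum_(j.+1 <= i < n.+1) c i) * (u j.+1 - u j).
  by rewrite big_nat_recr //= [X in _ + X * _]big_geq // mul0r addr0.
rewrite E1 E2 telescope_sumr // (big_nat_recr n.+1) //= IH.
rewrite (big_nat_recr n.+1 0 c) //=.
ring.
Qed.

Section Kernel.
Variables (F : fieldType) (L : fieldExtType F) (s : L -> L).
Hypothesis sD : forall x y, s (x + y) = s x + s y.
Hypothesis sM : forall x y, s (x * y) = s x * s y.
Hypothesis s1 : s 1 = 1.
Hypothesis sZ : forall (a : F) x, s (a *: x) = a *: s x.
Hypothesis sfix : forall x, s x = x -> x \in <[1]>%VS.

Lemma s0 : s 0 = 0.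
Proof. by apply: (addrI (s 0)); rewrite -sD !addr0. Qed.

Lemma sB x y : s (x - y) = s x - s y.
Proof. by have := sD (x - y) y; rewrite subrK => ->; rewrite addrK. Qed.

Lemma sinj x : s x = 0 -> x = 0.
Proof.
move=> h; case: (eqVneq x 0) => // nz.
have : s (x * x^-1) = 1 by rewrite mulfV // s1.
by rewrite sM h mul0r => /eqP; rewrite eq_sym oner_eq0.
Qed.

Lemma SD t x y : iter t s (x + y) = iter t s x + iter t s y.
Proof. by elim: t => //= t ->; rewrite sD. Qed.
Lemma SB t x y : iter t s (x - y) = iter t s x - iter t s y.
Proof. by elim: t => //= t ->; rewrite sB. Qed.
Lemma SM t x y : iter t s (x * y) = iter t s x * iter t s y.
Proof. by elim: t => //= t ->; rewrite sM. Qed.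
Lemma S1 t : iter t s 1 = 1.
Proof. by elim: t => //= t ->; rewrite s1. Qed.
Lemma SZ t (a : F) x : iter t s (a *: x) = a *: iter t s x.
Proof. by elim: t => //= t ->; rewrite sZ. Qed.
Lemma Sinj t x : iter t s x = 0 -> x = 0.
Proof. by elim: t => //= t IH /sinj. Qed.

Definition dlt (v x : L) := s (x / v) - x / v.

Lemma dlt_lin v : linear (dlt v).
Proof.
move=> a x y; rewrite /dlt mulrDl -scalerAl sD sZ scalerBr.
by rewrite opprD addrACA.
Qed.

Lemma ker_bound M D (c : nat -> L) :
  (exists2 i, (i <= D)%N & c i != 0) ->
  forall V : {vspace L},
  (forall x, x \in V -> \sum_(0 <= i < D.+1) c i * iter (M + i) s x = 0) ->
  (\dim V <= D)%N.
Proof.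
elim: D c => [|D IH] c [i hi ci] V HV.
  move: hi; rewrite leqn0 => /eqP ?; subst i.
  rewrite leqn0 dimv_eq0 -vpick0; apply/eqP.
  have := HV _ (memv_pick V); rewrite big_nat1 addn0 => /eqP.
  by rewrite mulf_eq0 (negPf ci) /= => /eqP /Sinj.
case: (eqVneq V 0%VS) => [->|nzV]; first by rewrite dimv0.
set v := vpick V.
have vV : v \in V by apply: memv_pick.
have nzv : v != 0 by rewrite vpick0.
pose c2 i := c i * iter (M + i) s v.
have HP : forall y, \sum_(0 <= i < D.+2) c i * iter (M + i) s (v * y)
    = \sum_(0 <= i < D.+2) c2 i * iter (M + i) s y.
  by move=> y; apply: eq_bigr => j _; rewrite SM mulrA.
have sum0 : \sum_(0 <= i < D.+2) c2 i = 0.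
  have := HV _ vV; rewrite -[v]mulr1 HP => H; rewrite -[RHS]H.
  by apply: eq_bigr => j _; rewrite S1 mulr1.
pose e j := \sum_(j.+1 <= i < D.+2) c2 i.
have c2nz : c2 i != 0.
  rewrite mulf_neq0 //; apply/eqP => /Sinj /eqP; by rewrite (negPf nzv).
have eS : forall j, (j <= D)%N -> e j = c2 j.+1 + e j.+1.
  by move=> j hj; rewrite /e big_ltn.
have He : exists2 j, (j <= D)%N & e j != 0.
  case: i hi ci c2nz => [|i] hi ci c2nz.
    exists 0%N => //; apply: contra c2nz => /eqP e0.
    rewrite big_ltn // -/(e 0%N) in sum0.
    by rewrite e0 addr0 in sum0; rewrite sum0.
  have hiD : (i <= D)%N by [].
  case: (eqVneq (e i) 0) => [e0|]; last by exists i.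
  have hi1 : (i.+1 <= D)%N.
    rewrite leqNgt; apply/negP => hlt.
    have e1 : e i.+1 = 0 by rewrite /e big_geq.
    by move: e0; rewrite eS // e1 addr0 => c0; rewrite c0 eqxx in c2nz.
  exists i.+1 => //; apply: contra c2nz => /eqP e1.
  by move: e0; rewrite eS // e1 addr0 => ->.
pose f := linfun (@linwrap F L (dlt v) (dlt_lin v)).
have HQ : forall z, z \in (f @: V)%VS ->
    \sum_(0 <= j < D.+1) e j * iter (M + j) s z = 0.
  move=> z /memv_imgP [x xV ->]; rewrite linwrapE /dlt.
  set y := x / v.
  have hx : x = v * y by rewrite mulrC divfK.
  move: (HV _ xV); rewrite {1}hx HP (@abel _ c2 (fun i => iter (M + i) s y)).
  rewrite sum0 mul0r add0r => H; rewrite -[RHS]H.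
  by apply: eq_bigr => j _; rewrite addnS iterSr SB.
have dimImg : (\dim (f @: V) <= D)%N by apply: (IH e He).
have dimKer : (\dim (V :&: lker f) <= 1)%N.
  apply: leq_trans (dimvS (_ : (V :&: lker f <= <[v]>)%VS)) _.
    apply/subvP => x /memv_capP [xV]; rewrite memv_ker linwrapE /dlt subr_eq0.
    move=> /eqP /sfix /vlineP [a ha].
    have -> : x = (x / v) * v by rewrite divfK.
    by rewrite ha -scalerAl mul1r memvZ // memv_line.
  by rewrite dim_vline nzv.
by rewrite -(limg_ker_dim f V) -add1n leq_add.
Qed.
End Kernel.

Lemma ar1 NN e D h : D = (h*2+1)%N -> (h * (2 * (NN*e)) + NN*e = NN * (D*e))%N.
Proof. move->; ring. Qed.
Lemma ar2 NN e D h : D = (h*2+1)%N -> (NN * (D*e) + NN*e = (h + 1) * (2 * (NN*e)) + 0)%N.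
Proof. move->; ring. Qed.
Lemma ar3 NN e D j : (e * ((NN + j) * D) = (NN + j) * (D*e))%N.
Proof. ring. Qed.
Lemma ar4 NN e D j : (j <= NN)%N -> ((NN - j) * (D*e) + (NN + j) * (D*e) = D * (2 * (NN*e)) + 0)%N.
Proof. move=> h; rewrite -mulnDl [(NN - j + _)%N]addnCA subnK //; ring. Qed.

Section Main.
Variables (F : finFieldType) (L : fieldExtType F) (e n : nat).
Hypothesis Fcard : #|F| = (2 ^ e)%N.
Hypothesis e_gt0 : (0 < e)%N.
Hypothesis n_gt0 : (0 < n)%N.
Hypothesis edvd : (e %| n)%N.
Hypothesis Ldim : \dim {:L} = ((2 * n) %/ e)%N.

Definition Frob (t : nat) (x : L) := x ^+ (2 ^ t).

Lemma c2 : 2%N \in [pchar L].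
Proof. by rewrite (pchar_lalg L) (card_finPcharP Fcard). Qed.

Lemma two0 : 2%:R = 0 :> L.
Proof. exact: pcharf0 c2. Qed.

Lemma FrobD t x y : Frob t (x + y) = Frob t x + Frob t y.
Proof.
rewrite /Frob; elim: t => [|t IH]; first by rewrite !expr1.
by rewrite expnSr !exprM IH sqrrD -mulr_natr two0 mulr0 addr0.
Qed.

Lemma FrobM t x y : Frob t (x * y) = Frob t x * Frob t y.
Proof. exact: exprMn. Qed.

Lemma Frob1 t : Frob t 1 = 1.
Proof. exact: expr1n. Qed.

Lemma FrobZ t (a : F) x : Frob t (a *: x) = a ^+ (2 ^ t) *: Frob t x.
Proof. exact: exprZn. Qed.

Lemma FrobF s t x : Frob s (Frob t x) = Frob (t + s) x.
Proof. by rewrite /Frob -exprM -expnD. Qed.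

Lemma Fcard_fix (a : F) q : a ^+ (2 ^ (e * q)) = a.
Proof.
elim: q => [|q IH]; first by rewrite muln0 expr1.
by rewrite mulnS expnD exprM -Fcard expf_card IH.
Qed.

Lemma Lcard : #|finvect_type L| = (2 ^ (2 * n))%N.
Proof.
have := card_vspace (fullv : {vspace finvect_type L}).
have -> : #|(fullv : {vspace finvect_type L})| = #|finvect_type L|.
  by apply: eq_card => v; rewrite memvf.
move=> ->; rewrite Fcard -expnM.
have -> : \dim (fullv : {vspace finvect_type L}) = \dim {:L} by [].
by rewrite Ldim mulnC divnK // dvdn_mull.
Qed.

Lemma Frob2n x : Frob (2 * n) x = x.
Proof. by rewrite /Frob -Lcard; exact: (expf_card (x : finvect_type L)). Qed.

Lemma FrobP q r x : Frob (q * (2 * n) + r) x = Frob r x.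
Proof.
rewrite -FrobF; congr (Frob r _); elim: q => [|q IH]; first by rewrite /Frob expr1.
by rewrite mulSnr -FrobF IH Frob2n.
Qed.

Lemma FrobO x : Frob 0 x = x.
Proof. by rewrite /Frob expr1. Qed.

Lemma Frob0 t : Frob t 0 = 0.
Proof. by apply: (addrI (Frob t 0)); rewrite -FrobD !addr0. Qed.

Lemma Frob_fixe x : Frob e x = x -> x \in <[1]>%VS.
Proof.
move=> hx; case: (boolP (x \in <[1]>%VS)) => // notin; exfalso.
pose p : {poly L} := 'X^(2^e) - 'X.
have sp : size p = (2^e).+1.
  rewrite size_polyDl ?size_polyXn // size_polyN size_polyX ltnS.
  by apply: (@leq_trans (2^1)) => //; rewrite leq_exp2l.
have pnz : p != 0 by rewrite -size_poly_eq0 sp.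
pose rs := x :: map (in_alg L) (enum F).
have : (size rs < size p)%N.
  apply: max_poly_roots pnz _ _.
    apply/allP => z; rewrite inE => /orP [/eqP -> | /mapP [a _ ->]];
      rewrite /root !hornerE.
      by move: hx; rewrite /Frob => ->; rewrite subrr.
    by rewrite -rmorphXn -Fcard expf_card subrr.
  rewrite /= map_inj_uniq ?enum_uniq ?andbT; last exact: fmorph_inj.
  apply/mapP => [[a _ ha]]; apply/negP: notin; apply/negPn.
  by rewrite ha; apply: memvZ; apply: memv_line.
by rewrite sp /= size_map -cardE Fcard ltnn.
Qed.


Local Notation tr := (@trq F L e).
Lemma trqE N y : tr N y = \sum_(0 <= i < N) Frob (e * i) y.
Proof. by rewrite /trq big_mkord. Qed.

Lemma trqD N x y : tr N (x + y) = tr N x + tr N y.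
Proof. by rewrite /trq -big_split; apply: eq_bigr => i _; exact: FrobD. Qed.

Lemma trq0 N : tr N 0 = 0.
Proof. by apply: (addrI (tr N 0)); rewrite -trqD !addr0. Qed.

Lemma trq_sum N (r : seq nat) (P : pred nat) (f : nat -> L) :
  tr N (\sum_(j <- r | P j) f j) = \sum_(j <- r | P j) tr N (f j).
Proof. exact: (big_morph _ (trqD N) (trq0 N)). Qed.

Local Notation N2 := ((2 * n) %/ e)%N.

Lemma eN2 : (e * N2 = 2 * n)%N.
Proof. by rewrite mulnC divnK // dvdn_mull. Qed.

Lemma N2_gt0 : (0 < N2)%N.
Proof. by rewrite divn_gt0 // dvdn_leq // ?muln_gt0 // dvdn_mull. Qed.

Lemma TrF w : tr N2 (Frob e w) = tr N2 w.
Proof.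
rewrite !trqE; have := N2_gt0; have := eN2.
case: N2 => [|M] // hM _.
rewrite big_nat_recr // big_nat_recl //=.
rewrite [Frob (e * M) _]FrobF -mulnS hM Frob2n muln0 FrobO addrC.
by congr (_ + _); apply: eq_bigr => i _; rewrite FrobF -mulnS.
Qed.

Lemma TrFe s w : tr N2 (Frob (e * s) w) = tr N2 w.
Proof.
elim: s => [|s IH]; first by rewrite muln0 /Frob expr1.
by rewrite mulnS addnC -FrobF TrF IH.
Qed.

Lemma Tr_split u : tr N2 u = tr (n %/ e) (u + Frob n u).
Proof.
rewrite trqD /trq.
have -> : N2 = (n %/ e + n %/ e)%N by rewrite mul2n -addnn divnDl.
rewrite big_split_ord /=; congr (_ + _); apply: eq_bigr => i _.
by rewrite /Frob -exprM -expnD mulnDr [(e * (n %/ e))%N]mulnC divnK.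
Qed.

Lemma Tr_exists : exists w, tr N2 w != 0.
Proof.
case: (pickP (fun w : finvect_type L => tr N2 w != 0)) => [w hw|hall].
  by exists w.
exfalso.
move: hall; have := N2_gt0; have := eN2; case: N2 => [|M] // hM _ hall.
pose p : {poly L} := \sum_(i < M.+1) 'X^(2 ^ (e * i)).
have hp : forall w, p.[w] = tr M.+1 w.
  by move=> w; rewrite /p horner_sum; apply: eq_bigr => i _; rewrite hornerXn.
have ltM : (e * M < 2 * n)%N by rewrite -hM ltn_pmul2l.
have sp : size p = (2 ^ (e * M)).+1.
  rewrite /p big_ord_recr /= addrC size_polyDl size_polyXn //.
  apply: leq_ltn_trans (size_sum _ _ _) _.
  apply/bigmax_leqP => i _; rewrite size_polyXn.
rewrite ltn_exp2l // ltn_pmul2l //.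
have pnz : p != 0 by rewrite -size_poly_eq0 sp.
have := max_poly_roots pnz (rs := enum (finvect_type L)).
rewrite enum_uniq -cardE Lcard sp ltnS leqNgt ltn_exp2l // ltM.
move=> H; suff hA : all (root p) (enum (finvect_type L)) by move: (H hA isT).
apply/allP => w _; rewrite /root hp.
by have := hall w; rewrite /= => /negbFE.
Qed.

Lemma Tr_nondeg z : (forall y, tr N2 (y * z) = 0) -> z = 0.
Proof.
move=> H; case: (eqVneq z 0) => // nz; case: Tr_exists => w hw.
by move: (H (w / z)); rewrite divfK // => /eqP; rewrite (negPf hw).
Qed.


Variable d : nat.
Hypothesis d_gt0 : (0 < d)%N.
Hypothesis hg : e = gcdn (2 * n) d.

Lemma edvdd : (e %| d)%N.
Proof. by rewrite hg dvdn_gcdr. Qed.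

Lemma hd : d = (d %/ e * e)%N.
Proof. by rewrite divnK // edvdd. Qed.

Lemma hn : n = (n %/ e * e)%N.
Proof. by rewrite divnK. Qed.

Lemma Dodd : odd (d %/ e).
Proof.
apply: contraT => ev.
have hh : (d %/ e = (d %/ e)./2 * 2)%N.
  by rewrite -{1}(odd_double_half (d %/ e)) (negPf ev) add0n muln2.
have : (e * 2 %| e)%N.
  rewrite {2}hg dvdn_gcd; apply/andP; split; apply/dvdnP.
    by exists (n %/ e)%N; rewrite {1}hn; lia.
  by exists (d %/ e)%N./2; rewrite {1}hd {1}hh; lia.
by move/dvdn_leq => /(_ e_gt0); lia.
Qed.

Lemma FrobdZ (a : F) x : Frob d (a *: x) = a *: Frob d x.
Proof. by rewrite FrobZ {1}hd mulnC Fcard_fix. Qed.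

Lemma iterFrob i x : iter i (Frob d) x = Frob (i * d) x.
Proof.
elim: i => [|i IH]; first by rewrite mul0n FrobO.
by rewrite iterS IH FrobF mulSnr.
Qed.

Lemma Frob_fixd x : Frob d x = x -> x \in <[1]>%VS.
Proof.
move=> hx; apply: Frob_fixe.
case: (egcdnP (2 * n) d_gt0) => km kn H _.
have Hk : Frob (km * d) x = x.
  by elim: km {H} => [|km IH]; rewrite ?mul0n ?FrobO // mulSnr -FrobF IH hx.
by rewrite -[RHS]Hk H gcdnC -hg FrobP.
Qed.


Variables (k : nat) (a : nat -> L).
Hypothesis k_le : (k <= n %/ e)%N.
Hypothesis a0fix : a 0%N ^+ (2 ^ n) = a 0%N.

Local Notation N := (n %/ e)%N.

Definition Pp x := a 0%N * Frob (N * d) x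
  + \sum_(1 <= j < k) (a j * Frob ((N - j) * d) x
                        + Frob ((N + j) * d) (a j) * Frob ((N + j) * d) x).

Lemma BT x y : Bform n d e k a x y = tr N2 (y * Pp x).
Proof.
have hd' := hd; have hn' := hn; have od := Dodd.
have [h hh] : exists h, (d %/ e = h * 2 + 1)%N.
  by exists (d %/ e)./2; rewrite -{1}(odd_double_half (d %/ e)) od muln2 addnC.
rewrite /Bform -divn_mulAC // /Pp [in RHS]mulrDr [in RHS]trqD.
congr (_ + _).
  rewrite Tr_split; congr (tr N _).
  rewrite !FrobM [Frob n y](_ : _ = Frob (N * d) y); last first.
    rewrite -(FrobP h); congr Frob.
    by have := ar1 N e (d %/ e) h hh; rewrite -hd -hn.
  rewrite FrobF (_ : (N * d + n = (h + 1) * (2 * n) + 0)%N); last first.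
    by have := ar2 N e (d %/ e) h hh; rewrite -hd -hn.
  rewrite FrobP FrobO [Frob n (a 0%N)]a0fix /Frob.
  ring.
rewrite mulr_sumr trq_sum; apply: eq_big_nat => j /andP [hj1 hjk].
have hjN : (j <= N)%N by lia.
rewrite !mulrDr !trqD [LHS]addrC; congr (_ + _); first by rewrite /Frob; congr (tr N2 _); ring.
rewrite -(TrFe ((N + j) * (d %/ e))).
rewrite (_ : (e * ((N + j) * (d %/ e)) = (N + j) * d)%N); last first.
  by have := ar3 N e (d %/ e) j; rewrite -hd.
rewrite !FrobM FrobF (_ : ((N - j) * d + (N + j) * d = (d %/ e) * (2 * n) + 0)%N).
  by rewrite FrobP FrobO; congr (tr N2 _); rewrite /Frob; ring.
by have := ar4 N e (d %/ e) j hjN; rewrite -hd -hn.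
Qed.


Hypothesis k_gt0 : (0 < k)%N.
Local Notation K1 := (k - 1)%N.

Definition cf i := if (i < K1)%N then a (K1 - i)
  else if i == K1 then a 0%N else Frob ((N + (i - K1)) * d) (a (i - K1)).

Definition Qp x := \sum_(0 <= i < (K1 + K1).+1) cf i * iter (N - K1 + i) (Frob d) x.

Lemma QP x : Qp x = Pp x.
Proof.
rewrite /Qp /Pp.
rewrite (big_cat_nat _ (n := K1)) //=; last by lia.
rewrite (big_ltn (m := K1)) /=; last by lia.
rewrite big_split /=.
have -> : \sum_(0 <= i < K1) cf i * iter (N - K1 + i) (Frob d) x
    = \sum_(1 <= j < k) a j * Frob ((N - j) * d) x.
  rewrite big_add1 -subn1 big_nat_rev /= add0n.
  apply: eq_big_nat => i /andP [_ hi].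
  rewrite /cf iterFrob.
  have -> : (K1 - i.+1 < K1)%N by lia.
  have -> : (K1 - (K1 - i.+1) = i.+1)%N by lia.
  have -> : (N - K1 + (K1 - i.+1) = N - i.+1)%N by lia.
  by [].
have -> : \sum_(K1.+1 <= i < (K1 + K1).+1) cf i * iter (N - K1 + i) (Frob d) x
    = \sum_(1 <= j < k) Frob ((N + j) * d) (a j) * Frob ((N + j) * d) x.
  rewrite -add1n big_addn.
  have -> : ((K1 + K1).+1 - K1 = k)%N by lia.
  apply: eq_big_nat => i /andP [hi1 hi].
  rewrite /cf iterFrob.
  have -> : (i + K1 < K1)%N = false by lia.
  have -> : (i + K1 == K1) = false by apply/eqP; lia.
  have -> : (i + K1 - K1 = i)%N by lia.
  have -> : (N - K1 + (i + K1) = N + i)%N by lia.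
  by [].
rewrite /cf ltnn eqxx iterFrob.
have -> : (N - K1 + K1 = N)%N by lia.
by rewrite addrCA.
Qed.


Lemma Qlin : linear Qp.
Proof.
move=> al x y; rewrite /Qp scaler_sumr -big_split; apply: eq_bigr => i _ /=.
rewrite !iterFrob FrobD mulrDr; congr (_ + _).
rewrite FrobZ (_ : ((N - K1 + i) * d = e * ((N - K1 + i) * (d %/ e)))%N).
  by rewrite Fcard_fix scalerAr.
by rewrite {1}hd; ring.
Qed.


Lemma main_bound : (exists2 j, (j < k)%N & a j != 0) ->
  (\dim (RadB n d e k a) <= K1 + K1)%N.
Proof.
move=> [j hj aj].
have cnz : exists2 i, (i <= K1 + K1)%N & cf i != 0.
  case: j hj aj => [|j] hj aj.
    by exists K1; [lia | rewrite /cf ltnn eqxx].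
  exists (K1 - j.+1)%N; first lia.
  rewrite /cf (_ : (K1 - j.+1 < K1)%N); last lia.
  by rewrite (_ : (K1 - (K1 - j.+1) = j.+1)%N) //; lia.
pose f := linfun (@linwrap F L Qp Qlin).
have sub : (RadB n d e k a <= lker f)%VS.
  apply/span_subvP => z /mapP [w]; rewrite mem_enum /= => /forallP hw ->.
  rewrite memv_ker linwrapE QP; apply/eqP; apply: Tr_nondeg => y.
  by rewrite -BT; apply/eqP; exact: hw y.
apply: (@ker_bound F L (Frob d) (FrobD d) (FrobM d) (Frob1 d) FrobdZ Frob_fixd
  (N - K1)%N _ cf cnz).
move=> x /(subvP sub); rewrite memv_ker linwrapE => /eqP.
by [].
Qed.

End Main.

Theorem theorem2p1 (n d e k : nat) (F : finFieldType) (L : fieldExtType F)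
  (a : nat -> L) :
  (0 < n)%N -> (0 < d)%N -> (0 < e)%N ->
  e = gcdn n d -> e = gcdn (2 * n) d ->
  (1 <= k)%N -> (k <= n %/ e)%N ->
  #|F| = (2 ^ e)%N ->
  \dim {:L} = ((2 * n) %/ e)%N ->
  a 0%N ^+ (2 ^ n) = a 0%N ->
  (exists2 j : nat, (j < k)%N & a j != 0) ->
  ((2 * n) %/ e - 2 * (k - 1) <= rkB n d e k a)%N.
Proof.
move=> n_gt0 d_gt0 e_gt0 hg1 hg k1 kle Fcard Ldim a0 hex.
have edvd : (e %| n)%N by rewrite hg1 dvdn_gcdl.
have := @main_bound F L e n Fcard e_gt0 n_gt0 edvd Ldim d d_gt0 hg k a kle a0 k1 hex.
move=> H; rewrite /rkB; apply: leq_sub2l.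
by rewrite mul2n -addnn.
Qed.
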